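(* Assume $q<\ell$. For every $Z\in S^{\ell}_{q,p}$, the set $$\mathcal{C}_Z:=\bigcup_{E\in\Lambda^{\ell}_Z}T^{1,0}_Z\,Gr(q,E)$$ is not contained in any proper complex linear subspace of $T^{1,0}_ZS^{\ell}_{q,p}$.
   Context: Let $q<p$ and $q\le\ell\le(p+q)/2$ be positive integers, $m=p+q-\ell$. $Gr(q,p)$ is the Grassmannian of $q$-planes in $\mathbb{C}^{p+q}$; $\langle u,v\rangle_{\ell,m}=-\sum_{i=1}^{\ell}u_i\bar v_i+\sum_{i=\ell+1}^{p+q}u_i\bar v_i$; $S^{\ell}_{q,p}=\{Z\in Gr(q,p):\langle\cdot,\cdot\rangle_{\ell,m}|_Z=0\}$ with the CR structure induced from $Gr(q,p)$. $N(\ell,m)$ is the set of subspaces $F\subset\mathbb{C}^{p+q}$ with $\langle\cdot,\cdot\rangle_{\ell,m}|_F=0$, and for $F\in N(\ell,m)$ and $n\ge\dim F$, $\Lambda^n_F=\{E\in N(\ell,m):\dim E=n,\ F\subset E\}$. For $E\in\Lambda^\ell_Z$, $Gr(q,E)$ (the $q$-planes contained in $E$) is a complex submanifold of $Gr(q,p)$ contained in $S^{\ell}_{q,p}$ and passing through $Z$. *)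

(* Defs.v *)
From HB Require Import structures.
From mathcomp Require Import all_boot all_order all_algebra.
Set Implicit Arguments. Unset Strict Implicit. Unset Printing Implicit Defensive.
Import Order.TTheory GRing.Theory Num.Theory.
Local Open Scope ring_scope.

Definition hform (C : numClosedFieldType) (n l : nat) (u v : 'rV[C]_n) : C :=
  \sum_(i < n) (if (i < l)%N then -1 else 1) * u 0 i * (v 0 i)^*.

Definition isotropic (C : numClosedFieldType) (n l k : nat) (A : 'M[C]_(k, n)) : Prop :=
  forall u v : 'rV[C]_n, (u <= A)%MS -> (v <= A)%MS -> hform l u v = 0.

(* Tangent space of Gr(q,n) at the q-plane Z (rows of Z : 'M_(q,n), a basis)
   is Hom(Z, C^n/Z); a tangent vector is represented by X : 'M_(q,n)
   (row i of X = image of basis vector row i Z), modulo matrices X with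
   (X <= Z)%MS.  Its complex structure J is multiplication by 'i.

   Real tangent space of S = {Z : <.,.>|_Z = 0} at Z: derivative of
   <z_i + t X_i, z_j + t X_j> at t = 0 vanishes. *)
Definition S_tangent (C : numClosedFieldType) (n l q : nat)
    (Z X : 'M[C]_(q, n)) : Prop :=
  forall i j : 'I_q, hform l (row i X) (row j Z) + hform l (row i Z) (row j X) = 0.

(* Complex (CR) tangent space H_Z S = T_Z S /\ J T_Z S, which as a complex
   vector space (with J) is T^{1,0}_Z S. *)
Definition S_CRtangent (C : numClosedFieldType) (n l q : nat)
    (Z X : 'M[C]_(q, n)) : Prop :=
  S_tangent l Z X /\ S_tangent l Z ('i *: X).

(* Tangent vectors at Z of Gr(q,E) for a subspace E containing Z:
   Hom(Z, E/Z), i.e. representatives X with rows in E. *)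
Definition Gr_tangent (C : numClosedFieldType) (n q k : nat)
    (E : 'M[C]_(k, n)) (X : 'M[C]_(q, n)) : Prop := (X <= E)%MS.

(* Main.v *)
Require Import Defs.
From HB Require Import structures.
From mathcomp Require Import all_boot all_order all_algebra.
From mathcomp Require Import ring zify.
Import Order.TTheory GRing.Theory Num.Theory.
Set Implicit Arguments. Unset Strict Implicit. Unset Printing Implicit Defensive.
Local Open Scope ring_scope.


Lemma sgn_conj (C : numClosedFieldType) (l : nat) (i : nat) :
  ((if (i < l)%N then -1 else 1) : C)^* = if (i < l)%N then -1 else 1.
Proof. by case: ifP; rewrite ?rmorphN rmorph1. Qed.

Lemma hD1 (C : numClosedFieldType) n l (u1 u2 v : 'rV[C]_n) :
  hform l (u1 + u2) v = hform l u1 v + hform l u2 v.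
Proof.
rewrite /hform -big_split; apply: eq_bigr => i _; rewrite !mxE /=; ring.
Qed.

Lemma hZ1 (C : numClosedFieldType) n l (c : C) (u v : 'rV[C]_n) :
  hform l (c *: u) v = c * hform l u v.
Proof.
rewrite /hform mulr_sumr; apply: eq_bigr => i _; rewrite !mxE /=; ring.
Qed.

Lemma hsym (C : numClosedFieldType) n l (u v : 'rV[C]_n) :
  hform l v u = (hform l u v)^*.
Proof.
rewrite /hform rmorph_sum; apply: eq_bigr => i _.
rewrite !rmorphM /= conjCK; case: ifP => _; rewrite ?rmorphN rmorph1; ring.
Qed.

Lemma h0l (C : numClosedFieldType) n l (v : 'rV[C]_n) : hform l 0 v = 0.
Proof. by rewrite -(scale0r (0 : 'rV[C]_n)) hZ1 mul0r. Qed.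

Lemma h0r (C : numClosedFieldType) n l (v : 'rV[C]_n) : hform l v 0 = 0.
Proof. by rewrite hsym h0l conjC0. Qed.

Lemma hD2 (C : numClosedFieldType) n l (u v1 v2 : 'rV[C]_n) :
  hform l u (v1 + v2) = hform l u v1 + hform l u v2.
Proof. by rewrite hsym hD1 rmorphD /= -!hsym. Qed.

Lemma hZ2 (C : numClosedFieldType) n l (c : C) (u v : 'rV[C]_n) :
  hform l u (c *: v) = c^* * hform l u v.
Proof. by rewrite hsym hZ1 rmorphM /= -hsym. Qed.

Lemma hsum1 (C : numClosedFieldType) n l (v : 'rV[C]_n) (I : Type) (r : seq I)
   (P : pred I) (F : I -> 'rV[C]_n) :
  hform l (\sum_(i <- r | P i) F i) v = \sum_(i <- r | P i) hform l (F i) v.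
Proof. exact: (big_morph (fun u => hform l u v) (fun a b => hD1 l a b v) (h0l l v)). Qed.

Lemma hmul1 (C : numClosedFieldType) n l k (a : 'rV[C]_k) (A : 'M[C]_(k, n)) v :
  hform l (a *m A) v = \sum_i a 0 i * hform l (row i A) v.
Proof. by rewrite mulmx_sum_row hsum1; apply: eq_bigr => i _; rewrite hZ1. Qed.

Lemma hmulE (C : numClosedFieldType) n l k (a : 'rV[C]_k) (A : 'M[C]_(k, n)) x v :
  x = a *m A -> hform l x v = \sum_i a 0 i * hform l (row i A) v.
Proof. by move=> ->; apply: hmul1. Qed.

Definition perp (C : numClosedFieldType) n l k (u : 'rV[C]_n) (F : 'M[C]_(k, n)) :=
  forall j, hform l u (row j F) = 0.

Lemma perp_sub (C : numClosedFieldType) n l k (u : 'rV[C]_n) (F : 'M[C]_(k, n)) x :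
  perp l u F -> (x <= F)%MS -> hform l u x = 0 /\ hform l x u = 0.
Proof.
move=> hp /submxP [a Ha].
have E := hmulE l u Ha.
have E0 : hform l x u = 0.
  by rewrite E big1 // => i _; rewrite hsym hp conjC0 mulr0.
by rewrite hsym E0 conjC0.
Qed.

Lemma perp_comb (C : numClosedFieldType) n l k (u v : 'rV[C]_n) (F : 'M[C]_(k, n)) c d :
  perp l u F -> perp l v F -> perp l (c *: u + d *: v) F.
Proof. by move=> hu hv j; rewrite hD1 !hZ1 hu hv !mulr0 addr0. Qed.

Definition iso' (C : numClosedFieldType) n l k (A : 'M[C]_(k, n)) :=
  forall i j, hform l (row i A) (row j A) = 0.

Lemma isoP (C : numClosedFieldType) n l k (A : 'M[C]_(k, n)) :
  iso' l A <-> isotropic l A.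
Proof.
split=> [h u v hu hv | h i j]; last by apply: h; apply: row_sub.
have hp : forall i, perp l (row i A) A by move=> i j; apply: h.
move/submxP: hu => [a Ha].
rewrite (hmulE l v Ha) big1 // => i _.
by have [-> _] := perp_sub (hp i) hv; rewrite mulr0.
Qed.

Lemma ker_proj (C : fieldType) n k (Pr : 'M[C]_n) (M : 'M[C]_(n,k)) :
  (k < \rank Pr)%N -> exists b : 'rV_n, (b *m Pr != 0) /\ (b *m Pr) *m M = 0.
Proof.
move=> hk; set B := kermx (Pr *m M).
have hB : B *m Pr != 0.
  apply/negP => /eqP /sub_kermxP hs.
  have := mxrankS hs; rewrite !mxrank_ker.
  have := rank_leq_col (Pr *m M); have := rank_leq_row Pr; lia.
have [i Hi] : exists i, row i (B *m Pr) != 0.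
  case: (pickP (fun i => row i (B *m Pr) != 0)) => [i Hi|H]; first by exists i.
  case/negP: hB; apply/eqP/row_matrixP => i; rewrite row0; exact/eqP/negbFE/H.
exists (row i B); split; first by rewrite -row_mul.
by rewrite -mulmxA -row_mul mulmx_ker row0.
Qed.

Definition Kmx (C : numClosedFieldType) n l k (F : 'M[C]_(k, n)) : 'M[C]_(n, k) :=
  \matrix_(i, j) ((if (i < l)%N then -1 else 1) * (F j i)^*).

Lemma KE (C : numClosedFieldType) n l k (F : 'M[C]_(k, n)) (u : 'rV[C]_n) j :
  (u *m Kmx l F) 0 j = hform l u (row j F).
Proof. rewrite !mxE /hform; apply: eq_bigr => x _; rewrite !mxE; ring. Qed.

Lemma ExP (C : numClosedFieldType) n l k (F : 'M[C]_(k, n)) :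
  (k < l)%N -> (l <= n)%N ->
  exists a : 'rV[C]_n, [/\ a != 0, perp l a F & forall x : 'I_n, (l <= x)%N -> a 0 x = 0].
Proof.
move=> hkl hln.
have := @ker_proj C n k (pid_mx l) (Kmx l F); rewrite rank_pid_mx //.
case=> // b [nz Hk]; exists (b *m pid_mx l); split => //.
  by move=> j; rewrite -KE Hk mxE.
move=> x hx; rewrite mxE big1 // => y _; rewrite mxE.
have -> : ((y == x :> nat) && (y < l)%N) = false.
  by apply/negP => /andP [/eqP ->]; rewrite ltnNge hx.
by rewrite mulr0.
Qed.

Lemma ExN (C : numClosedFieldType) n l k (F : 'M[C]_(k, n)) :
  (k < n - l)%N -> (l <= n)%N ->
  exists b : 'rV[C]_n, [/\ b != 0, perp l b F & forall x : 'I_n, (x < l)%N -> b 0 x = 0].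
Proof.
move=> hkl hln.
have := @ker_proj C n k (copid_mx l) (Kmx l F); rewrite rank_copid_mx //.
case=> // b [nz Hk]; exists (b *m copid_mx l); split => //.
  by move=> j; rewrite -KE Hk mxE.
move=> x hx; rewrite mxE big1 // => y _; rewrite !mxE.
case: (eqVneq y x) => [->|ne]; first by rewrite eqxx hx /= subrr mulr0.
have ne' : (y == x :> nat) = false by apply/negbTE.
by rewrite ne' ?(negbTE ne) /= subrr mulr0.
Qed.

Lemma normsum (C : numClosedFieldType) n (a : 'rV[C]_n) :
  a != 0 -> 0 < \sum_x a 0 x * (a 0 x)^*.
Proof.
move=> nz.
have [x hx] : exists x, a 0 x != 0.
  case: (pickP (fun x => a 0 x != 0)) => [x Hx|H]; first by exists x.
  case/negP: nz; apply/eqP/rowP => x; rewrite mxE; exact/eqP/negbFE/H.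
rewrite (bigD1 x) //=; apply: ltr_wpDr; first by apply: sumr_ge0 => y _; apply: mul_conjC_ge0.
by rewrite mul_conjC_gt0.
Qed.

Lemma hPneg (C : numClosedFieldType) n l (a : 'rV[C]_n) :
  a != 0 -> (forall x : 'I_n, (l <= x)%N -> a 0 x = 0) -> hform l a a < 0.
Proof.
move=> nz hs.
have -> : hform l a a = - \sum_x a 0 x * (a 0 x)^*.
  rewrite /hform -sumrN; apply: eq_bigr => x _.
  case: (ltnP x l) => hx; first by rewrite mulN1r mulNr.
  by rewrite hs // conjC0 !mulr0 oppr0.
by rewrite oppr_lt0 normsum.
Qed.

Lemma hNpos (C : numClosedFieldType) n l (b : 'rV[C]_n) :
  b != 0 -> (forall x : 'I_n, (x < l)%N -> b 0 x = 0) -> 0 < hform l b b.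
Proof.
move=> nz hs.
have -> : hform l b b = \sum_x b 0 x * (b 0 x)^*.
  rewrite /hform; apply: eq_bigr => x _.
  case: (ltnP x l) => hx; last by rewrite mul1r.
  by rewrite hs // conjC0 !mulr0.
by rewrite normsum.
Qed.

Lemma hPN (C : numClosedFieldType) n l (a b : 'rV[C]_n) :
  (forall x : 'I_n, (l <= x)%N -> a 0 x = 0) ->
  (forall x : 'I_n, (x < l)%N -> b 0 x = 0) -> hform l a b = 0.
Proof.
move=> ha hb; rewrite /hform big1 // => x _.
case: (ltnP x l) => hx; first by rewrite hb // conjC0 mulr0.
by rewrite ha // mulr0 mul0r.
Qed.

Lemma hcomb (C : numClosedFieldType) n l (a b : 'rV[C]_n) (c d : C) :
  c^* = c -> d^* = d -> hform l a b = 0 ->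
  hform l (c *: a + d *: b) (c *: a + d *: b) = c^+2 * hform l a a + d^+2 * hform l b b.
Proof.
move=> hc hd hab.
rewrite hD1 !hD2 !hZ1 !hZ2 (hsym l a b) hab conjC0 hc hd; ring.
Qed.

Lemma real_sqrt (C : numClosedFieldType) (x : C) : 0 <= x -> (sqrtC x)^* = sqrtC x.
Proof. by move=> hx; apply/eqP; rewrite -CrealE; apply: ger0_real; rewrite sqrtC_ge0. Qed.

Lemma row1 (C : numClosedFieldType) n (w : 'rV[C]_n) (j : 'I_1) : row j w = w.
Proof. by apply/rowP => x; rewrite mxE (ord1 j). Qed.

Lemma IsoVec (C : numClosedFieldType) n l k (F : 'M[C]_(k, n)) :
  iso' l F -> (k < l)%N -> (l.*2 <= n)%N ->
  exists w : 'rV[C]_n, [/\ hform l w w = 0, perp l w F & ~~ (w <= F)%MS].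
Proof.
move=> hF hkl hn.
have hln : (l <= n)%N by lia.
have [a [nza pa sa]] := ExP F hkl hln.
have [b [nzb pb sb]] := @ExN C n l k F ltac:(lia) hln.
have hal := hPneg nza sa; have hbe := hNpos nzb sb; have hab := hPN sa sb.
set al := hform l a a in hal *; set be := hform l b b in hbe *.
set ca := sqrtC be; set cb := sqrtC (- al).
have rca : ca^* = ca by apply: real_sqrt; apply: ltW.
have rcb : cb^* = cb by apply: real_sqrt; rewrite oppr_ge0; apply: ltW.
have rcb' : (- cb)^* = - cb by rewrite rmorphN /= rcb.
have ca2 : ca ^+ 2 = be by rewrite sqrtCK.
have cb2 : cb ^+ 2 = - al by rewrite sqrtCK.
set wp := ca *: a + cb *: b; set wm := ca *: a + (- cb) *: b.
have hwp : hform l wp wp = 0 by rewrite hcomb // ca2 cb2 -/al -/be; ring.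
have hwm : hform l wm wm = 0 by rewrite hcomb // sqrrN ca2 cb2 -/al -/be; ring.
have nca : ca != 0 by rewrite sqrtC_eq0 gt_eqF.
have both : ~~ ((wp <= F)%MS && (wm <= F)%MS).
  apply/negP => /andP [h1 h2].
  have E : wp + wm = (ca *+ 2) *: a.
    by rewrite /wp /wm scaleNr addrACA subrr addr0 -scalerDl mulr2n.
  have h2ca : ca *+ 2 != 0 by rewrite mulrn_eq0 negb_or nca.
  have ha : (a <= F)%MS.
    have -> : a = (ca *+ 2)^-1 *: (wp + wm) by rewrite E scalerA mulVf // scale1r.
    by apply: scalemx_sub; apply: addmx_sub.
  have : al = 0 by move/isoP: hF; apply.
  by move/eqP; rewrite lt_eqF.
case: (boolP (wp <= F)%MS) => hp.
  exists wm; split => //; first exact: perp_comb.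
  by apply/negP => hm; case/negP: both; rewrite hp hm.
by exists wp; split => //; apply: perp_comb.
Qed.

Lemma col_step (C : numClosedFieldType) n l k (F : 'M[C]_(k, n)) (w : 'rV[C]_n) :
  iso' l F -> row_free F -> hform l w w = 0 -> perp l w F -> ~~ (w <= F)%MS ->
  iso' l (col_mx F w) /\ row_free (col_mx F w).
Proof.
move=> hF hfree hw pw nw; split.
  move=> i j.
  case: (split_ordP i) => i' ->; case: (split_ordP j) => j' ->;
    rewrite ?rowKu ?rowKd ?row1 //;
    first [ exact: hF | by rewrite hsym pw conjC0 | exact: pw ].
rewrite /row_free -(addsmxE F w).1.
have h1 := mxrank_leqif_sup (addsmxSl F w).
have h2 : ~~ (F + w <= F)%MS.
  by apply/negP => h; case/negP: nw; apply: submx_trans h; apply: addsmxSr.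
have h3 := ltn_leqif h1; rewrite h2 in h3.
have h4 := (mxrank_adds_leqif F w).1.
have h5 := rank_leq_row w.
move/eqP: hfree => hr; apply/eqP; lia.
Qed.

Lemma Extend (C : numClosedFieldType) n l d : forall k (F : 'M[C]_(k, n)),
  iso' l F -> row_free F -> (k + d = l)%N -> (l.*2 <= n)%N ->
  exists E : 'M[C]_n, [/\ iso' l E, \rank E = l & (F <= E)%MS].
Proof.
elim: d => [|d IH] k F hF hfree hkd hn.
  exists <<F>>%MS; split.
  - apply: (proj2 (isoP _ _)) => u v; rewrite !genmxE; exact: (proj1 (isoP _ _) hF).
  - by rewrite mxrank_gen; move/eqP: hfree; lia.
  - by rewrite genmxE.
have hk : (k < l)%N by lia.
have [w [hw pw nw]] := IsoVec hF hk hn.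
have [hF' hfree'] := col_step hF hfree hw pw nw.
have [E [hE rE sE]] := IH (k + 1)%N (col_mx F w) hF' hfree' ltac:(lia) hn.
exists E; split => //.
apply: submx_trans sE; by rewrite -addsmxE addsmxSl.
Qed.

Lemma ExtU (C : numClosedFieldType) n l q (Z : 'M[C]_(q, n)) (u : 'rV[C]_n) :
  iso' l Z -> row_free Z -> (q < l)%N -> (l.*2 <= n)%N ->
  hform l u u = 0 -> perp l u Z ->
  exists E : 'M[C]_n, [/\ isotropic l E, \rank E = l, (Z <= E)%MS & (u <= E)%MS].
Proof.
move=> hZ hfree hql hn hu pu.
case: (boolP (u <= Z)%MS) => hs.
  have [E [hE rE sE]] := @Extend C n l (l - q) q Z hZ hfree ltac:(lia) hn.
  by exists E; split => //; [apply/isoP | apply: submx_trans sE].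
have [hF' hfree'] := col_step hZ hfree hu pu hs.
have [E [hE rE sE]] := @Extend C n l (l - q - 1) (q + 1) (col_mx Z u) hF' hfree' ltac:(lia) hn.
exists E; split => //; first exact/isoP.
  by apply: submx_trans sE; rewrite -addsmxE addsmxSl.
by apply: submx_trans sE; rewrite -addsmxE addsmxSr.
Qed.

Lemma Split (C : numClosedFieldType) n l q (Z : 'M[C]_(q, n)) (v : 'rV[C]_n) :
  (q < l)%N -> (l.*2 <= n)%N -> perp l v Z ->
  exists v1 v2 : 'rV[C]_n,
    [/\ v = v1 + v2, hform l v1 v1 = 0, hform l v2 v2 = 0, perp l v1 Z & perp l v2 Z].
Proof.
move=> hql hn pv.
have hln : (l <= n)%N by lia.
set g := hform l v v.
have rg : g^* = g by rewrite /g -hsym.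
case: (eqVneq g 0) => g0.
  exists v, 0; split => //; first by rewrite addr0.
  - exact: h0l.
  - by move=> j; rewrite h0l.
have greal : g \is Num.real by rewrite CrealE rg.
have [y [py hyg]] : exists y, perp l y Z /\ hform l y y * g < 0.
  have := real_neqr_lt greal (real0 C); rewrite g0 => /esym /orP [hg|hg].
    have [b [nzb pb sb]] := @ExN C n l q Z ltac:(lia) hln.
    by exists b; split => //; rewrite nmulr_llt0 // hNpos.
  have [a [nza pa sa]] := @ExP C n l q Z hql hln.
  by exists a; split => //; rewrite pmulr_llt0 // hPneg.
set t := hform l y v.
set c := t / g.
set w0 := y + (- c) *: v.
have pw0 : perp l w0 Z by move=> j; rewrite hD1 hZ1 py pv mulr0 addr0.
have hw0v : hform l w0 v = 0.
  by rewrite hD1 hZ1 -/t -/g /c; field.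
have hvw0 : hform l v w0 = 0 by rewrite hsym hw0v conjC0.
set dl := hform l w0 w0.
have rd : dl^* = dl by rewrite /dl -hsym.
have dlE : dl = hform l y y - t^* * t / g.
  rewrite /dl {1}/w0 hD1 hZ1 hvw0 mulr0 addr0 /w0 hD2 hZ2 -/t /c rmorphN /=.
  rewrite fmorph_div /= rg; field.
  by [].
have hdg : dl * g < 0.
  have -> : dl * g = hform l y y * g - t * t^*.
    by rewrite dlE; field.
  by rewrite subr_lt0; apply: lt_le_trans hyg (mul_conjC_ge0 t).
have dl0 : dl != 0 by apply/eqP => d0; move: hdg; rewrite d0 mul0r ltxx.
set s := sqrtC (- g / dl).
have sge : 0 <= - g / dl.
  have -> : - g / dl = - (dl * g) / (dl * dl^*) by rewrite rd; field.
  apply: divr_ge0; first by rewrite oppr_ge0 ltW.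
  exact: mul_conjC_ge0.
have s2 : s ^+ 2 = - g / dl by rewrite sqrtCK.
have rs : s^* = s by apply: real_sqrt.
have i2 : (2^-1 : C)^* = 2^-1 by rewrite fmorphV /= rmorph_nat.
have two0 : (2 : C) != 0 by rewrite pnatr_eq0.
have r1 : (2^-1 * s)^* = 2^-1 * s by rewrite rmorphM /= i2 rs.
have r2 : (- (2^-1 * s))^* = - (2^-1 * s) by rewrite rmorphN /= r1.
exists (2^-1 *: v + (2^-1 * s) *: w0), (2^-1 *: v + (- (2^-1 * s)) *: w0); split.
- rewrite addrACA -scalerDl scaleNr subrr addr0.
  have -> : (2^-1 + 2^-1 : C) = 1 by field.
  by rewrite scale1r.
- rewrite hcomb // -/g -/dl exprMn s2; field; by [].
- rewrite hcomb // -/g -/dl sqrrN exprMn s2; field; by [].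
- exact: perp_comb.
- exact: perp_comb.
Qed.

Lemma rowZ' (C : numClosedFieldType) m n (c : C) (X : 'M[C]_(m, n)) i :
  row i (c *: X) = c *: row i X.
Proof. by apply/rowP => x; rewrite !mxE. Qed.

Lemma CR_perp (C : numClosedFieldType) n l q (Z X : 'M[C]_(q, n)) :
  S_CRtangent l Z X -> forall i, perp l (row i X) Z.
Proof.
move=> [h1 h2] i j.
have e1 := h1 i j; have e2 := h2 i j.
rewrite !rowZ' hZ1 hZ2 conjCi in e2.
set A := hform l (row i X) (row j Z) in e1 e2 *.
set B := hform l (row i Z) (row j X) in e1 e2 *.
have E : 'i * (A *+ 2) = 'i * (A + B) + ('i * A + - 'i * B) by ring.
rewrite e1 e2 mulr0 add0r in E.
by move/eqP: E; rewrite mulf_eq0 (negbTE (@neq0Ci C)) /= mulrn_eq0 /= => /eqP.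
Qed.

Lemma decomp (C : numClosedFieldType) q n (X : 'M[C]_(q, n)) :
  X = \sum_i (delta_mx i 0 : 'M[C]_(q, 1)) *m row i X.
Proof.
apply/matrixP => a b; rewrite summxE (bigD1 a) //= big1 ?addr0.
  by rewrite mxE big_ord1 !mxE !eqxx mul1r.
move=> i ne; rewrite mxE big_ord1 !mxE.
by rewrite eq_sym (negbTE ne) mul0r.
Qed.

Theorem lemma3p1 (C : numClosedFieldType) (q p l : nat)
  (hq0 : (0 < q)%N) (hqp : (q < p)%N) (hql : (q <= l)%N)
  (hl2 : (l.*2 <= p + q)%N) (hqlt : (q < l)%N)
  (Z : 'M[C]_(q, p + q)) (hZfree : row_free Z) (hZ : isotropic l Z)
  (W : 'M[C]_(q * (p + q))) :
  (forall X : 'M[C]_(q, p + q), (X <= Z)%MS -> (mxvec X <= W)%MS) ->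
  (forall X : 'M[C]_(q, p + q), (mxvec X <= W)%MS -> S_CRtangent l Z X) ->
  (forall E : 'M[C]_(p + q), isotropic l E -> \rank E = l -> (Z <= E)%MS ->
     forall X : 'M[C]_(q, p + q), Gr_tangent E X -> (mxvec X <= W)%MS) ->
  forall X : 'M[C]_(q, p + q), S_CRtangent l Z X -> (mxvec X <= W)%MS.
Proof.
move=> _ _ HWE X HX.
have hp := CR_perp HX.
have iZ : iso' l Z := proj2 (isoP _ _) hZ.
rewrite (decomp X) linear_sum; apply: summx_sub => i _.
have [v1 [v2 [-> h1 h2 p1 p2]]] := Split hqlt hl2 (hp i).
rewrite mulmxDr linearD; apply: addmx_sub.
  have [E [iE rE sZ sv]] := ExtU iZ hZfree hqlt hl2 h1 p1.
  by apply: (HWE E iE rE sZ); apply: submx_trans (submxMl _ _) sv.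
have [E [iE rE sZ sv]] := ExtU iZ hZfree hqlt hl2 h2 p2.
by apply: (HWE E iE rE sZ); apply: submx_trans (submxMl _ _) sv.
Qed.
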